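(* Let $T$ be a regular $n$-IET, $n\ge1$, over the ordered alphabet $\mathcal{A}$ with permutation $\pi\in S_{\mathcal{A}}$, and let $\mathcal{L}(T)$ be its language. Then every return word in $\mathcal{L}(T)$ is $\pi$-clustering for $\mathcal{A}$; i.e., for every $u\in\mathcal{L}(T)$ and every $w\in\mathcal{R}(u)$, $w$ is $\pi$-clustering.
   Context: An $n$-IET $T$ on $I=[\ell,r)$ over $\mathcal{A}=\{a_1<\dots<a_n\}$ is given by a partition of $I$ into left-closed right-open intervals $(I_a)_{a\in\mathcal{A}}$ of positive length ordered left to right by the order of $\mathcal{A}$, and a permutation $\pi$ of $\mathcal{A}$; $T(x)=x+\tau_a$ on $I_a$ with $\tau_a=\sum_{b:\,\pi^{-1}(b)<\pi^{-1}(a)}|I_b|-\sum_{b<a}|I_b|$. The set of formal discontinuities is $D(T)=\{\ell+\sum_{b<a}|I_b|: a\in\mathcal{A}\}\setminus\{\ell\}$; $T$ is regular (Keane condition) if the orbits $\{T^m(x):m\in\mathbb{Z}\}$ of the points of $D(T)$ are infinite and pairwise disjoint. Trajectories $\Omega_T(x)=w_0w_1\cdots$ with $w_i=a$ iff $T^i(x)\in I_a$; $\mathcal{L}(T)$ is the set of finite factors of all trajectories. Return words: $\mathcal{R}(u)=\{w\in\mathcal{A}^*: wu\in(\mathcal{L}(T)\cap u\mathcal{A}^* )\setminus\mathcal{A}^+u\mathcal{A}^+\}$. For a word $v$ of length $m$, $\mathrm{bwt}_{\mathcal{A}}(v)$ is the word of last letters of the $m$ cyclic rotations of $v$ sorted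 lexicographically w.r.t. the order of $\mathcal{A}$; $v$ is $\pi$-clustering for $\mathcal{A}$ if $\mathrm{bwt}_{\mathcal{A}}(v)=\pi(a_1)^{k_1}\cdots\pi(a_n)^{k_n}$ with $k_i=|v|_{\pi(a_i)}$. *)

(* Defs.v *)
From mathcomp Require Import all_boot all_order all_algebra all_fingroup.
From mathcomp Require Import boolp classical_sets cardinality reals.
Set Implicit Arguments. Unset Strict Implicit. Unset Printing Implicit Defensive.
Import Order.TTheory GRing.Theory Num.Theory.
Local Open Scope ring_scope.
Local Open Scope classical_set_scope.

(* Alphabet: 'I_n = {0 < 1 < ... < n-1} with the natural order.
   An n-IET is given by lengths lam : 'I_n -> R (positive), a left endpoint l,
   and a permutation pi : {perm 'I_n}. *)

Definition lsum (R : realType) (n : nat) (lam : 'I_n -> R) (a : 'I_n) : R :=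
  \sum_(b < n | (b < a)%N) lam b.

Definition left_end (R : realType) (n : nat) (lam : 'I_n -> R) (l : R) (a : 'I_n) : R :=
  l + lsum lam a.

Definition in_Ia (R : realType) (n : nat) (lam : 'I_n -> R) (l : R) (a : 'I_n) (x : R) : bool :=
  (left_end lam l a <= x) && (x < left_end lam l a + lam a).

Definition in_I (R : realType) (n : nat) (lam : 'I_n -> R) (l : R) (x : R) : bool :=
  (l <= x) && (x < l + \sum_(b < n) lam b).

Definition tau (R : realType) (n : nat) (pi : {perm 'I_n}) (lam : 'I_n -> R) (a : 'I_n) : R :=
  \sum_(b < n | ((pi^-1)%g b < (pi^-1)%g a)%N) lam b - lsum lam a.

(* the IET T : T x = x + tau_a for x in I_a (identity outside I) *)
Definition iet (R : realType) (n : nat) (pi : {perm 'I_n}) (lam : 'I_n -> R) (l : R) (x : R) : R :=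
  x + \sum_(a < n) (if in_Ia lam l a x then tau pi lam a else 0).

(* the orbit {T^m x : m \in Z}; since T is a bijection of I,
   T^(-m) x = y iff y \in I and T^m y = x *)
Definition iet_orbit (R : realType) (n : nat) (pi : {perm 'I_n}) (lam : 'I_n -> R) (l : R)
  (x : R) : set R :=
  [set y | (y = x \/ in_I lam l y) /\
           exists m : nat, iter m (iet pi lam l) x = y \/ iter m (iet pi lam l) y = x].

Definition discont (R : realType) (n : nat) (lam : 'I_n -> R) (l : R) : set R :=
  [set d | exists a : 'I_n, d = left_end lam l a /\ d <> l].

Definition regular (R : realType) (n : nat) (pi : {perm 'I_n}) (lam : 'I_n -> R) (l : R) : Prop :=
  (forall d, discont lam l d -> infinite_set (iet_orbit pi lam l d)) /\
  (forall d1 d2, discont lam l d1 -> discont lam l d2 -> d1 <> d2 ->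
     iet_orbit pi lam l d1 `&` iet_orbit pi lam l d2 = set0).

(* u is a factor of some trajectory Omega_T(x), x \in I :
   u = w_k w_{k+1} ... w_{k+|u|-1} with w_i = a iff T^i x \in I_a *)
Definition in_lang (R : realType) (n : nat) (pi : {perm 'I_n}) (lam : 'I_n -> R) (l : R)
  (u : seq 'I_n) : Prop :=
  exists x, in_I lam l x /\ exists k : nat,
    forall (i : nat) (a : 'I_n), onth u i = Some a ->
      in_Ia lam l a (iter (k + i) (iet pi lam l) x).

(* w \in R(u) : wu \in (L(T) \cap u A^* ) \ A^+ u A^+ *)
Definition return_word (R : realType) (n : nat) (pi : {perm 'I_n}) (lam : 'I_n -> R) (l : R)
  (u w : seq 'I_n) : Prop :=
  [/\ in_lang pi lam l (w ++ u),
      prefix u (w ++ u) &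
      ~ (exists p s : seq 'I_n, [/\ (0 < size p)%N, (0 < size s)%N & w ++ u = p ++ u ++ s])].

Fixpoint lex_le (n : nat) (s t : seq 'I_n) : bool :=
  match s, t with
  | [::], _ => true
  | _ :: _, [::] => false
  | x :: s', y :: t' => (x < y)%N || ((x == y) && lex_le s' t')
  end.

Definition bwt (n : nat) (v : seq 'I_n) : seq 'I_n :=
  pmap (fun r => ohead (rev r))
       (sort (@lex_le n) [seq rot i v | i <- iota 0 (size v)]).

Definition pi_clustering (n : nat) (pi : {perm 'I_n}) (v : seq 'I_n) : Prop :=
  bwt v = flatten [seq nseq (count_mem (pi a) v) (pi a) | a <- enum 'I_n].

(* Main.v *)
Require Import Defs.
From mathcomp Require Import all_boot all_order all_algebra all_fingroup.
From mathcomp Require Import boolp classical_sets cardinality reals.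
From mathcomp Require Import lra zify.
Import Order.TTheory GRing.Theory Num.Theory.
Local Open Scope ring_scope.
Set Implicit Arguments. Unset Strict Implicit. Unset Printing Implicit Defensive.

Lemma sum_lt_le (R : realType) (n : nat) (lam : 'I_n -> R) (g : 'I_n -> nat) (a b : 'I_n) :
  (forall c, 0 < lam c) -> (g b < g a)%N ->
  \sum_(c < n | (g c < g b)%N) lam c + lam b <= \sum_(c < n | (g c < g a)%N) lam c.
Proof.
move=> hpos hba.
rewrite [X in _ <= X](bigID (fun c => (g c < g b)%N)) /=.
have -> : \sum_(i < n | (g i < g a)%N && (g i < g b)%N) lam i =
          \sum_(c < n | (g c < g b)%N) lam c.
  apply: eq_bigl => c; apply/andP/idP => [[] //|h]; split => //.
  exact: ltn_trans h hba.
rewrite lerD2l (bigD1 b) /=; last by rewrite hba ltnn.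
rewrite lerDl; apply: sumr_ge0 => c _; exact: ltW.
Qed.

Lemma in_Ia_lt (R : realType) (n : nat) (lam : 'I_n -> R) (l : R) (a b : 'I_n) (p q : R) :
  (forall c, 0 < lam c) -> in_Ia lam l a p -> in_Ia lam l b q -> (b < a)%N -> q < p.
Proof.
move=> hpos /andP[ha1 ha2] /andP[hb1 hb2] hba.
have := @sum_lt_le R n lam (fun c => nat_of_ord c) a b hpos hba.
move: ha1 ha2 hb1 hb2; rewrite /left_end /lsum => *; lra.
Qed.

Lemma in_Ia_uniq (R : realType) (n : nat) (lam : 'I_n -> R) (l : R) (a b : 'I_n) (p : R) :
  (forall c, 0 < lam c) -> in_Ia lam l a p -> in_Ia lam l b p -> a = b.
Proof.
move=> hpos ha hb; case: (ltngtP a b) => h.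
- by have := in_Ia_lt hpos hb ha h; rewrite ltxx.
- by have := in_Ia_lt hpos ha hb h; rewrite ltxx.
- exact: val_inj.
Qed.

Lemma in_Ia_le (R : realType) (n : nat) (lam : 'I_n -> R) (l : R) (a b : 'I_n) (p q : R) :
  (forall c, 0 < lam c) -> in_Ia lam l a p -> in_Ia lam l b q -> p < q -> (a <= b)%N.
Proof.
move=> hpos ha hb hpq; rewrite leqNgt; apply/negP => h.
by have := in_Ia_lt hpos ha hb h; rewrite ltNge (ltW hpq).
Qed.

Lemma iet_in (R : realType) (n : nat) (pi : {perm 'I_n}) (lam : 'I_n -> R) (l : R) (a : 'I_n) (p : R) :
  (forall c, 0 < lam c) -> in_Ia lam l a p -> iet pi lam l p = p + tau pi lam a.
Proof.
move=> hpos ha; rewrite /iet (bigD1 a) //= ha big1 ?addr0 // => b hb.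
case hb': (in_Ia lam l b p) => //.
by move: hb; rewrite (in_Ia_uniq hpos ha hb') eqxx.
Qed.

Lemma iet_img (R : realType) (n : nat) (pi : {perm 'I_n}) (lam : 'I_n -> R) (l : R) (a b : 'I_n) (p q : R) :
  (forall c, 0 < lam c) -> in_Ia lam l a p -> in_Ia lam l b q ->
  ((pi^-1)%g a < (pi^-1)%g b)%N -> iet pi lam l p < iet pi lam l q.
Proof.
move=> hpos ha hb hab; rewrite (iet_in pi hpos ha) (iet_in pi hpos hb).
have := @sum_lt_le R n lam (fun c => nat_of_ord ((pi^-1)%g c)) b a hpos hab.
move: ha hb; rewrite /tau /in_Ia /left_end => /andP[? ?] /andP[? ?]; lra.
Qed.

Lemma iet_same (R : realType) (n : nat) (pi : {perm 'I_n}) (lam : 'I_n -> R) (l : R) (a : 'I_n) (p q : R) :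
  (forall c, 0 < lam c) -> in_Ia lam l a p -> in_Ia lam l a q ->
  p < q -> iet pi lam l p < iet pi lam l q.
Proof.
move=> hpos ha hb hab; rewrite (iet_in pi hpos ha) (iet_in pi hpos hb); lra.
Qed.

Lemma iet_same_le (R : realType) (n : nat) (pi : {perm 'I_n}) (lam : 'I_n -> R) (l : R) (a : 'I_n) (p q : R) :
  (forall c, 0 < lam c) -> in_Ia lam l a p -> in_Ia lam l a q ->
  p <= q -> iet pi lam l p <= iet pi lam l q.
Proof.
move=> hpos ha hb hab; rewrite (iet_in pi hpos ha) (iet_in pi hpos hb); lra.
Qed.

Lemma in_Ia_conv (R : realType) (n : nat) (lam : 'I_n -> R) (l : R) (a : 'I_n) (p q r : R) :
  in_Ia lam l a p -> in_Ia lam l a r -> p <= q -> q <= r -> in_Ia lam l a q.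
Proof.
rewrite /in_Ia => /andP[? ?] /andP[? ?] ? ?; apply/andP; split; lra.
Qed.
Lemma nth_rot_mod (T : Type) (x0 : T) (s : seq T) (a t : nat) :
  (a <= size s)%N -> (t < size s)%N -> nth x0 (rot a s) t = nth x0 s ((a + t) %% size s).
Proof.
move=> ha ht; rewrite /rot nth_cat size_drop; case: ifP => h.
  by rewrite nth_drop modn_small //; lia.
rewrite nth_take; last by lia.
have -> : (a + t = (t - (size s - a)) + size s)%N by lia.
by rewrite modnDr modn_small //; lia.
Qed.

Fixpoint cw (T : Type) (x0 : T) (s : seq T) (a N : nat) : seq T :=
  if N is N'.+1 then nth x0 s (a %% size s) :: cw x0 s a.+1 N' else [::].

Lemma size_cw (T : Type) (x0 : T) (s : seq T) a N : size (cw x0 s a N) = N.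
Proof. by elim: N a => //= N IH a; rewrite IH. Qed.

Lemma nth_cw (T : Type) (x0 : T) (s : seq T) a N t : (t < N)%N ->
  nth x0 (cw x0 s a N) t = nth x0 s ((a + t) %% size s).
Proof.
elim: N a t => // N IH a [|t] /= ht; first by rewrite addn0.
by rewrite IH // addSnnS.
Qed.

Lemma cw_rot (T : Type) (x0 : T) (s : seq T) a : (a < size s)%N ->
  cw x0 s a (size s) = rot a s.
Proof.
move=> ha; apply: (@eq_from_nth _ x0); first by rewrite size_cw size_rot.
rewrite size_cw => t ht; rewrite nth_cw // nth_rot_mod //; exact: ltnW.
Qed.

Lemma onth_some (T : Type) (x0 : T) (s : seq T) i : (i < size s)%N -> onth s i = Some (nth x0 s i).
Proof. by elim: s i => // a s IH [|i] //= h; rewrite IH. Qed.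

Fixpoint starts (R : realType) (n : nat) (lam : 'I_n -> R) (l : R) (T : R -> R)
   (u : seq 'I_n) (p : R) : Prop :=
  if u is a :: u' then in_Ia lam l a p /\ starts lam l T u' (T p) else True.

Lemma starts_nth (R : realType) (n : nat) (lam : 'I_n -> R) (l : R) (T : R -> R) (c0 : 'I_n) u p :
  (forall i, (i < size u)%N -> in_Ia lam l (nth c0 u i) (iter i T p)) -> starts lam l T u p.
Proof.
elim: u p => //= a u IH p h; split; first exact: (h 0%N).
apply: IH => i hi; rewrite -iterSr; exact: (h i.+1).
Qed.

Lemma starts_nthE (R : realType) (n : nat) (lam : 'I_n -> R) (l : R) (T : R -> R) (c0 : 'I_n) u p :
  starts lam l T u p -> forall i, (i < size u)%N -> in_Ia lam l (nth c0 u i) (iter i T p).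
Proof.
elim: u p => //= a u IH p [h1 h2] [|i] //= hi.
have := IH _ h2 i hi; by rewrite -iterSr.
Qed.

Lemma starts_conv (R : realType) (n : nat) (pi : {perm 'I_n}) (lam : 'I_n -> R) (l : R) u :
  (forall c, 0 < lam c) -> forall p q r,
  starts lam l (iet pi lam l) u p -> starts lam l (iet pi lam l) u r -> p <= q -> q <= r ->
  starts lam l (iet pi lam l) u q.
Proof.
move=> hpos; elim: u => //= a u IH p q r [hp1 hp2] [hr1 hr2] hpq hqr; 
have hq := in_Ia_conv hp1 hr1 hpq hqr; split => //.
apply: (IH _ _ _ hp2 hr2).
  exact: (iet_same_le pi hpos hp1 hq).
exact: (iet_same_le pi hpos hq hr1).
Qed.

Lemma dyn (R : realType) (n : nat) (pi : {perm 'I_n}) (lam : 'I_n -> R) (l : R)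
  (c0 : 'I_n) (w u : seq 'I_n) (x : R) (k : nat) :
  (forall c, 0 < lam c) ->
  (forall t, (t < size (w ++ u))%N ->
     in_Ia lam l (nth c0 (w ++ u) t) (iter (k + t) (iet pi lam l) x)) ->
  prefix u (w ++ u) ->
  ~ (exists p s : seq 'I_n, [/\ (0 < size p)%N, (0 < size s)%N & w ++ u = p ++ u ++ s]) ->
  forall a b, (a < size w)%N -> (b < size w)%N ->
  ((pi^-1)%g (last c0 (rot a w)) < (pi^-1)%g (last c0 (rot b w)))%N ->
  lex_le (rot b w) (rot a w) = false.
Proof.
move=> hpos hz hpre hret.
set T := iet pi lam l. set m := size w.
pose y t := iter (k + t) T x.
have yS t : y t.+1 = T (y t) by rewrite /y addnS.
have iterY i t : iter i T (y t) = y (t + i).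
  by rewrite /y -iterD; congr (iter _ _ _); lia.
have hw t : (t < m)%N -> in_Ia lam l (nth c0 w t) (y t).
  move=> ht; have := hz t; rewrite nth_cat -/m ht size_cat; apply; lia.
have hu t : (t < size u)%N -> in_Ia lam l (nth c0 u t) (y (m + t)).
  move=> ht; have := hz (m+t); rewrite nth_cat -/m.
  have -> : (m + t < m)%N = false by lia.
  rewrite addKn size_cat; apply; lia.
have J0 : starts lam l T u (y 0).
  apply: (starts_nth (c0:=c0)) => i hi; rewrite iterY.
  have hi' : (i < size (w ++ u))%N by rewrite size_cat; lia.
  have hue : take (size u) (w ++ u) = u by apply/eqP; rewrite -prefixE.
  have hn : nth c0 (w ++ u) i = nth c0 u i by rewrite -[in RHS]hue nth_take.
  have := hz i hi'; rewrite hn; exact.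
have Jm : starts lam l T u (y m).
  apply: (starts_nth (c0:=c0)) => i hi; rewrite iterY; exact: hu.
have Jn r : (0 < r < m)%N -> ~ starts lam l T u (y r).
  move=> /andP[r0 rm] hs; apply: hret.
  have hs' := starts_nthE c0 hs.
  have hsz : size (take (size u) (drop r (w ++ u))) = size u.
    rewrite size_take size_drop size_cat -/m; case: ifP => h; lia.
  have e : take (size u) (drop r (w ++ u)) = u.
    apply: (@eq_from_nth _ c0) => // i; rewrite hsz => hi.
    rewrite nth_take // nth_drop.
    apply: (in_Ia_uniq hpos (hz _ _)); first by rewrite size_cat; lia.
    have := hs' i hi; rewrite iterY //.
  exists (take r (w ++ u)), (drop (r + size u) (w ++ u)); split.
  - rewrite size_take size_cat -/m; case: ifP => h; lia.
  - rewrite size_drop size_cat; lia.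
  - rewrite -[LHS](cat_take_drop r) -[drop r _](cat_take_drop (size u)) e drop_drop.
    by rewrite addnC.
have wrap r : (0 < r < m)%N -> (y m < y r -> y 0 < y r) /\ (y r < y m -> y r < y 0).
  move=> hr; split => h; rewrite ltNge; apply/negP => h'; apply: (Jn r hr).
  - exact: (starts_conv hpos Jm J0 (ltW h) h').
  - exact: (starts_conv hpos J0 Jm h' (ltW h)).
have wrapY s1 s2 : (0 < s1 <= m)%N -> (0 < s2 <= m)%N -> s1 != s2 ->
    y s1 < y s2 -> y (s1 %% m)%N < y (s2 %% m)%N.
  move=> h1 h2 hne hlt.
  have [e1|l1] : s1 = m \/ (s1 < m)%N by lia.
  - have [e2|l2] : s2 = m \/ (s2 < m)%N by lia.
    + by rewrite e1 e2 eqxx in hne.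
    + rewrite e1 modnn (modn_small l2); rewrite e1 in hlt.
      apply: (wrap s2 _).1 => //; lia.
  - have [e2|l2] : s2 = m \/ (s2 < m)%N by lia.
    + rewrite e2 modnn (modn_small l1); rewrite e2 in hlt.
      apply: (wrap s1 _).2 => //; lia.
    + by rewrite !modn_small.
have trans a' b' : (a' < m)%N -> (b' < m)%N -> a' != b' -> nth c0 w a' = nth c0 w b' ->
    y a' < y b' -> y (a'.+1 %% m)%N < y (b'.+1 %% m)%N.
  move=> ha hb hne he hlt; apply: wrapY; [lia|lia|by rewrite eqSS|].
  rewrite !yS; apply: (iet_same pi hpos (hw _ ha)) => //; rewrite he; exact: hw.
have e1 c : ((c %% m).+1 %% m = c.+1 %% m)%N by rewrite -[(c %% m).+1]addn1 -[c.+1]addn1 modnDml.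
have L N : (0 < m)%N -> forall a b, (a %% m != b %% m)%N -> y (a %% m)%N < y (b %% m)%N ->
    lex_le (cw c0 w b N) (cw c0 w a N) -> cw c0 w a N = cw c0 w b N.
  move=> m0; elim: N => // N IH a b hne hlt /=; rewrite -/m.
  have ha := ltn_pmod a m0; have hb := ltn_pmod b m0.
  have hle := in_Ia_le hpos (hw _ ha) (hw _ hb) hlt.
  move=> /orP[h|/andP[/eqP he h]].
    by rewrite ltnNge hle in h.
  rewrite he; congr (_ :: _); apply: IH => //.
    by rewrite -[a.+1]addn1 -[b.+1]addn1 eqn_modDr.
  rewrite -(e1 a) -(e1 b); apply: trans => //; exact: esym.
move=> a b ha hb hlt.
have m0 : (0 < m)%N by lia.
pose a' := ((a + m.-1) %% m)%N; pose b' := ((b + m.-1) %% m)%N.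
have la : forall c, (c < m)%N -> last c0 (rot c w) = nth c0 w ((c + m.-1) %% m)%N.
  move=> c hc; rewrite -nth_last size_rot nth_rot_mod //; [exact: ltnW | lia].
rewrite (la _ ha) (la _ hb) -/a' -/b' in hlt.
have ha' : (a' < m)%N := ltn_pmod _ m0.
have hb' : (b' < m)%N := ltn_pmod _ m0.
have hne' : a' != b' by apply: contraTneq hlt => ->; rewrite ltnn.
have hy : y a'.+1 < y b'.+1.
  by rewrite !yS; exact: (iet_img hpos (hw _ ha') (hw _ hb') hlt).
have hrec : forall c, (c < m)%N -> (((c + m.-1) %% m).+1 %% m = c)%N.
  move=> c hc; rewrite e1 -addnS prednK // modnDr modn_small //.
have := wrapY _ _ _ _ _ hy; rewrite /a' /b' !hrec //.
move=> hyab.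
have hab : a != b by apply: contraNneq hne' => e; rewrite /a' /b' e eqxx.
have {}hyab := hyab ltac:(lia) ltac:(lia) ltac:(by rewrite eqSS).
apply/negP => hlex.
have := L m m0 a b; rewrite !modn_small // => /(_ hab hyab).
rewrite /m !cw_rot // => /(_ hlex) hrot.
by move: hlt; rewrite /a' /b' -(la _ ha) -(la _ hb) hrot ltnn.
Qed.

Lemma lex_total (n : nat) : total (@lex_le n).
Proof.
elim=> [|x s IH] [|y t] //=.
case: (ltngtP x y) => [h|h|/val_inj h] //=; first by rewrite orbT.
subst; rewrite eqxx /=; exact: IH.
Qed.

Lemma pmap_some (A B : Type) (g : A -> B) (s : seq A) : pmap (fun r => Some (g r)) s = map g s.
Proof. by elim: s => //= a s ->. Qed.

Lemma ohead_rev_last (T : Type) (c0 : T) (r : seq T) : (0 < size r)%N -> ohead (rev r) = Some (last c0 r).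
Proof. by case/lastP: r => // r a _; rewrite rev_rcons last_rcons. Qed.

Lemma pairwise_nseq (T : Type) (r : rel T) (x : T) k : r x x -> pairwise r (nseq k x).
Proof. by move=> hxx; elim: k => //= k ->; rewrite all_nseq hxx orbT. Qed.

Lemma count_sum (n : nat) (P : pred 'I_n) (s : seq 'I_n) :
  count P s = (\sum_(y : 'I_n) P y * count_mem y s)%N.
Proof.
elim: s => [|x s IH] /=; first by rewrite big1 // => y _; rewrite muln0.
rewrite IH.
under eq_bigr => y _ do rewrite mulnDr.
rewrite big_split /=; congr (_ + _)%N.
rewrite (bigD1 x) //= eqxx muln1 big1 ?addn0 // => y hy.
by rewrite eq_sym (negbTE hy) muln0.
Qed.

Lemma tgt_perm (n : nat) (pi : {perm 'I_n}) (w : seq 'I_n) :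
  perm_eq (flatten [seq nseq (count_mem (pi a) w) (pi a) | a <- enum 'I_n]) w.
Proof.
apply/seq.permP => P; rewrite count_flatten -map_comp sumnE big_map big_enum /=.
rewrite count_sum [RHS](reindex_inj (@perm_inj _ pi)) /=.
by apply: eq_big => [a|a _]; rewrite ?count_nseq.
Qed.

Lemma tgt_sorted (n : nat) (pi : {perm 'I_n}) (f : 'I_n -> nat) (s : seq 'I_n) :
  pairwise (fun a b : 'I_n => (a < b)%N) s ->
  pairwise (fun p q : 'I_n => ((pi^-1)%g p <= (pi^-1)%g q)%N)
    (flatten [seq nseq (f a) (pi a) | a <- s]).
Proof.
elim: s => //= a s IH /andP[hall hs]; rewrite pairwise_cat IH // andbT.
rewrite pairwise_nseq // andbT.
apply/allrelP => p q; rewrite mem_nseq => /andP[_ /eqP ->].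
move=> /flattenP [r /mapP [b hb ->]]; rewrite mem_nseq => /andP[_ /eqP ->].
rewrite !permK; apply: ltnW; exact: (allP hall b hb).
Qed.

Lemma enum_pairwise (n : nat) : pairwise (fun a b : 'I_n => (a < b)%N) (enum 'I_n).
Proof.
rewrite -sorted_pairwise; last by move=> ? ? ?; apply: ltn_trans.
have := iota_ltn_sorted 0 n; rewrite -val_enum_ord sorted_map.
by [].
Qed.

Lemma comb (n : nat) (pi : {perm 'I_n}) (c0 : 'I_n) (w : seq 'I_n) :
  (forall a b, (a < size w)%N -> (b < size w)%N ->
    ((pi^-1)%g (last c0 (rot a w)) < (pi^-1)%g (last c0 (rot b w)))%N ->
    lex_le (rot b w) (rot a w) = false) ->
  pi_clustering pi w.
Proof.
move=> key; rewrite /pi_clustering /bwt.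
set m := size w. set rots := [seq rot i w | i <- iota 0 m].
pose rel := fun p q : 'I_n => ((pi^-1)%g p <= (pi^-1)%g q)%N.
have memr r : r \in rots -> exists2 i, (i < m)%N & r = rot i w.
  by move=> /mapP [i]; rewrite mem_iota => /andP[_ hi] ->; exists i.
have hpm : pmap (fun r => ohead (rev r)) (sort (@lex_le n) rots) =
           map (last c0) (sort (@lex_le n) rots).
  rewrite -pmap_some; apply: eq_in_pmap => r; rewrite mem_sort => /memr [i hi ->].
  by apply: ohead_rev_last; rewrite size_rot; lia.
rewrite hpm.
apply: (@sorted_eq _ rel).
- by move=> ? ? ?; apply: leq_trans.
- move=> p q /andP[h1 h2]; apply: (@perm_inj _ (pi^-1)%g); apply: val_inj.
  by apply/eqP; rewrite eqn_leq; apply/andP; split.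
- apply: (@homo_sorted_in _ _ (mem rots) _ (@lex_le n)).
  + move=> r1 r2 /memr[i hi ->] /memr[j hj ->] hl.
    rewrite /rel leqNgt; apply/negP => hlt.
    by rewrite (key j i) in hl.
  + by apply/allP => r; rewrite mem_sort.
  + apply: sort_sorted => p q; exact: lex_total.
- apply: pairwise_sorted; apply: tgt_sorted; exact: enum_pairwise.
- apply: (@perm_trans _ w); last by rewrite perm_sym tgt_perm.
  apply: (@perm_trans _ (map (last c0) rots)).
    by apply: perm_map; rewrite perm_sort.
  have -> : map (last c0) rots = rot m.-1 w.
    rewrite -map_comp -[RHS](mkseq_nth c0 (rot m.-1 w)) size_rot /mkseq.
    rewrite -/m; apply/eq_in_map => i; rewrite mem_iota => /andP[_ hi] /=.
    rewrite -nth_last size_rot -/m nth_rot_mod -/m; [|lia|lia].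
    rewrite nth_rot_mod -/m; [by rewrite addnC|lia|lia].
  by rewrite perm_rot.
Qed.

Theorem lemma6p2 (R : realType) (n : nat) (pi : {perm 'I_n}) (lam : 'I_n -> R) (l : R) :
  (1 <= n)%N ->
  (forall a, 0 < lam a) ->
  regular pi lam l ->
  forall u w : seq 'I_n,
    in_lang pi lam l u -> return_word pi lam l u w -> pi_clustering pi w.
Proof.
move=> hn hpos _ u w _ [[x [_ [k hk]]] hpre hret].
pose c0 : 'I_n := Ordinal hn.
apply: (comb (c0:=c0)).
apply: (@dyn R n pi lam l c0 w u x k hpos _ hpre hret).
move=> t ht; apply: hk; exact: onth_some.
Qed.
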